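(* Let $M=\{0,1\}$ be the commutative monoid under multiplication. Then the simplicial set $K(M,2)$ is not a Skvortsov–Shehtman complex; specifically, it fails the Beck–Chevalley condition $\mathrm{BC}_{0,3}[5]$.
   Context: For a commutative monoid $M$ (written multiplicatively), $K(M,2)$ is the simplicial set whose $n$-simplices are families $(a_{ijk})_{0\le i<j<k\le n}$ of elements of $M$ satisfying $a_{ikl}a_{ijk}=a_{ijl}a_{jkl}$ for all $0\le i<j<k<l\le n$; the $j$-th face map omits all entries involving the index $j$ (and reindexes), and the $j$-th degeneracy map repeats the index $j$, inserting the unit of $M$ at the new entries. The Beck–Chevalley condition $\mathrm{BC}_{p,q}[n]$ ($n>1$, $0\le p<q\le n$) on a simplicial set $S$: for any $(n-1)$-simplices $c_p,c_q$ of $S$ with $d_pc_q=d_{q-1}c_p$ there exists an $n$-simplex $x$ of $S$ with $d_px=c_p$ and $d_qx=c_q$. $S$ is a Skvortsov–Shehtman complex if it satisfies all $\mathrm{BC}_{p,q}[n]$. *)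

(* Defs.v *)
From mathcomp Require Import all_boot.
Set Implicit Arguments. Unset Strict Implicit. Unset Printing Implicit Defensive.

(* An n-simplex is a family
   (a_{ijk})_{0<=i<j<k<=n}; we represent a family by a function
   nat -> nat -> nat -> M, only its values on 0<=i<j<k<=n being relevant,
   and compare n-families by agreement on those indices. *)
Definition family (M : Type) := nat -> nat -> nat -> M.

Definition fam_eq (M : Type) (n : nat) (a b : family M) : Prop :=
  forall i j k, i < j -> j < k -> k <= n -> a i j k = b i j k.

Definition is_simplex (M : Type) (mul : M -> M -> M) (n : nat) (a : family M) : Prop :=
  forall i j k l, i < j -> j < k -> k < l -> l <= n ->
    mul (a i k l) (a i j k) = mul (a i j l) (a j k l).

Definition delta (j i : nat) : nat := if i < j then i else i.+1.

Definition face (M : Type) (j : nat) (a : family M) : family M :=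
  fun i k l => a (delta j i) (delta j k) (delta j l).

Definition BC (M : Type) (mul : M -> M -> M) (n p q : nat) : Prop :=
  forall cp cq : family M,
    is_simplex mul n.-1 cp -> is_simplex mul n.-1 cq ->
    fam_eq n.-2 (face p cq) (face q.-1 cp) ->
    exists x : family M, is_simplex mul n x /\
      fam_eq n.-1 (face p x) cp /\ fam_eq n.-1 (face q x) cq.

Definition SS_complex (M : Type) (mul : M -> M -> M) : Prop :=
  forall n p q, 1 < n -> p < q -> q <= n -> BC mul n p q.

(* Main.v *)
Require Import Defs.
From mathcomp Require Import all_boot.
From mathcomp Require Import zify.

Definition cp : Defs.family bool := fun i j k =>
  (i, j, k) \in [:: (0,2,4); (1,2,3); (1,2,4)].
Definition cq : Defs.family bool := fun i j k =>
  (i, j, k) \in [:: (0,1,3); (0,1,4); (0,2,3); (0,2,4)].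

Definition ub (n : nat) := if n < 3 then n else n.-1.

Definition g (b1 b2 b3 b4 : bool) : Defs.family bool := fun i j k =>
  if i != 0 then cp i.-1 j.-1 k.-1
  else if (j != 3) && (k != 3) then cq 0 (ub j) (ub k)
  else if j == 3 then (if k == 4 then b3 else b4)
  else if j == 1 then b1 else b2.

Definition check (mul : bool -> bool -> bool) (n : nat) (a : Defs.family bool) :=
  all (fun i => all (fun j => all (fun k => all (fun l =>
    [&& i < j, j < k, k < l & l <= n] ==>
      (mul (a i k l) (a i j k) == mul (a i j l) (a j k l)))
    (iota 0 n.+1)) (iota 0 n.+1)) (iota 0 n.+1)) (iota 0 n.+1).

Lemma check_ok mul n a : is_simplex mul n a -> check mul n a.
Proof.
move=> H; apply/allP => i _; apply/allP => j _; apply/allP => k _;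
  apply/allP => l _; apply/implyP => /and4P [h1 h2 h3 h4].
by apply/eqP; apply: H.
Qed.

Lemma fam_simplex (mul : bool -> bool -> bool) n a b :
  fam_eq n a b -> is_simplex mul n a -> is_simplex mul n b.
Proof.
move=> E H i j k l h1 h2 h3 h4.
rewrite -!E; try lia.
exact: H.
Qed.

Lemma check_g b1 b2 b3 b4 : check andb 5 (g b1 b2 b3 b4) = false.
Proof. by case: b1; case: b2; case: b3; case: b4; vm_compute. Qed.

Lemma simplex_of_check (n : nat) (a : Defs.family bool) :
  check andb n a -> is_simplex andb n a.
Proof.
move=> /allP H i j k l h1 h2 h3 h4.
have Hi : i \in iota 0 n.+1 by rewrite mem_iota; lia.
have Hj : j \in iota 0 n.+1 by rewrite mem_iota; lia.
have Hk : k \in iota 0 n.+1 by rewrite mem_iota; lia.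
have Hl : l \in iota 0 n.+1 by rewrite mem_iota; lia.
move: (H i Hi) => /allP /(_ j Hj) /allP /(_ k Hk) /allP /(_ l Hl) /implyP.
by rewrite h1 h2 h3 h4 => /(_ isT) /eqP.
Qed.

Lemma notBC : ~ BC andb 5 0 3.
Proof.
move=> H.
have [||| x [Hx [H0 H3]]] := H cp cq.
- by apply: simplex_of_check; vm_compute.
- by apply: simplex_of_check; vm_compute.
- move=> i j k hij hjk hk.
  have hk' : k < 4 by [].
  move: hij hjk hk hk'.
  by case: k => [|[|[|[|[|k]]]]] //; case: j => [|[|[|[|[|j]]]]] //;
     case: i => [|[|[|[|[|i]]]]].
- have E : fam_eq 5 x (g (x 0 1 3) (x 0 2 3) (x 0 3 4) (x 0 3 5)).
    move=> i j k hij hjk hk.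
    have hk' : k < 6 by [].
    move: hij hjk hk hk'.
    case: k => [|[|[|[|[|[|k]]]]]] //; case: j => [|[|[|[|[|[|j]]]]]] //;
      case: i => [|[|[|[|[|[|i]]]]]] // _ _ _ _;
      match goal with |- x ?a ?b ?c = _ =>
        first [ reflexivity
              | exact (H0 (a.-1) (b.-1) (c.-1) erefl erefl erefl)
              | exact (H3 (ub a) (ub b) (ub c) erefl erefl erefl) ] end.
  have := @check_ok andb 5 _ (@fam_simplex andb _ _ _ E Hx).
  by rewrite check_g.
Qed.

(* M = {0,1} under multiplication, modelled as bool with andb (true = 1). *)
Theorem mainTheorem2 : ~ SS_complex andb /\ ~ BC andb 5 0 3.
Proof.
split; last exact: notBC.
move=> H; apply: notBC; exact: H.
Qed.
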